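(* Let $(Z,\delta)$ be a compact metric space. For each $n\ge1$, let $Z_n=X_n\cup\bigsqcup_{i\ge1}Y^{(i)}_n$ be a compact subset of $Z$, where $X_n$ is a non-empty compact set and $(Y^{(i)}_n)_{i\ge1}$ are pairwise disjoint, possibly empty, compact sets each intersecting $X_n$; choose $y^{(i)}_n\in Y^{(i)}_n\cap X_n$. Let $\mu_n$ be a finite Borel measure on $Z_n$, set $\gamma^{(i)}_n=\mu_n(Y^{(i)}_n\setminus X_n)$, $\mu^X_n=\mu_n(\cdot\cap X_n)$ and $\widetilde\mu_n=\mu^X_n+\sum_{i\ge1}\gamma^{(i)}_n\delta_{y^{(i)}_n}$. Suppose that $Z_n\to Z_\infty$ in the $\delta$-Hausdorff metric, that each $Z_n$ (with the metric induced by $\delta$) is geodesic, that $Z_\infty$ is 2-connected, that $\mu_n\to\mu_\infty$ in the $\delta$-Prokhorov metric and that $\mu_\infty$ is diffuse. If $\sup_{i\ge1}\mathrm{diam}(X_n\cap Y^{(i)}_n)\to0$ and $\liminf_n\mu_n(X_n)>0$, then $\sup_{i\ge1}\mathrm{diam}(Y^{(i)}_n)\to0$, and consequently (i) $X_n\to Z_\infty$ in the $\delta$-Hausdorff metric, and (ii) $\widetilde\mu_n\to\mu_\infty$ in the $\delta$-Prokhorov metric. Furthermore $\sup_{i\ge1}\gamma^{(i)}_n\to0$.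
   Context: A compact metric space $(X,d)$ is geodesic if for all $x,y\in X$ there is an isometry $p:[0,d(x,y)]\to X$ with $p(0)=x$, $p(d(x,y))=y$. A metric space $X$ is 2-connected if $X\setminus\{x_0\}$ is connected for every $x_0\in X$. A Borel measure is diffuse if every singleton has measure zero. Hausdorff and Prokhorov metrics are the usual ones in $(Z,\delta)$ (Prokhorov for finite measures: $\inf\{\epsilon>0:\mu(A)\le\mu'(A^\epsilon)+\epsilon,\ \mu'(A)\le\mu(A^\epsilon)+\epsilon\ \forall A\}$). *)

(* Defs.v *)
From Stdlib Require Import Reals List ClassicalDescription.
From Coquelicot Require Import Coquelicot.
Open Scope R_scope.
Set Implicit Arguments.

Section Defs.
Variable Z : Type.
Variable d : Z -> Z -> R.

Definition is_metric : Prop :=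
  (forall x y, 0 <= d x y) /\ (forall x y, d x y = 0 <-> x = y) /\
  (forall x y, d x y = d y x) /\ (forall x y z, d x z <= d x y + d y z).

Definition is_open (U : Z -> Prop) : Prop :=
  forall x, U x -> exists r, 0 < r /\ forall z, d x z < r -> U z.

Definition is_compact (K : Z -> Prop) : Prop :=
  forall (I : Type) (U : I -> Z -> Prop),
    (forall i, is_open (U i)) -> (forall z, K z -> exists i, U i z) ->
    exists l : list I, forall z, K z -> exists i, In i l /\ U i z.

Definition sigma_algebra (S : (Z -> Prop) -> Prop) : Prop :=
  S (fun _ => True) /\ (forall A, S A -> S (fun z => ~ A z)) /\
  (forall A : nat -> Z -> Prop, (forall k, S (A k)) -> S (fun z => exists k, A k z)).

Definition borel (A : Z -> Prop) : Prop :=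
  forall S, sigma_algebra S -> (forall U, is_open U -> S U) -> S A.

(* finite (real-valued) Borel measure; its values on non-Borel sets are irrelevant *)
Definition finite_borel_measure (m : (Z -> Prop) -> R) : Prop :=
  (forall A, borel A -> 0 <= m A) /\ m (fun _ => False) = 0 /\
  (forall A : nat -> Z -> Prop, (forall k, borel (A k)) ->
     (forall j k z, j <> k -> A j z -> A k z -> False) ->
     is_series (fun k => m (A k)) (m (fun z => exists k, A k z))).

Definition nbhd (A : Z -> Prop) (eps : R) : Z -> Prop :=
  fun z => exists a, A a /\ d z a < eps.

Definition hausdorff_cv (A : nat -> Z -> Prop) (B : Z -> Prop) : Prop :=
  forall eps, 0 < eps -> exists N, forall n, (N <= n)%nat ->
    (forall a, A n a -> nbhd B eps a) /\ (forall b, B b -> nbhd (A n) eps b).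

Definition prokhorov_cv (mn : nat -> (Z -> Prop) -> R) (m : (Z -> Prop) -> R) : Prop :=
  forall eps, 0 < eps -> exists N, forall n, (N <= n)%nat ->
    forall A, borel A ->
      mn n A <= m (nbhd A eps) + eps /\ m A <= mn n (nbhd A eps) + eps.

Definition geodesic (K : Z -> Prop) : Prop :=
  forall x y, K x -> K y ->
    exists p : R -> Z, p 0 = x /\ p (d x y) = y /\
      (forall s, 0 <= s <= d x y -> K (p s)) /\
      (forall s t, 0 <= s <= d x y -> 0 <= t <= d x y -> d (p s) (p t) = Rabs (s - t)).

Definition connected (S : Z -> Prop) : Prop :=
  ~ exists U V, is_open U /\ is_open V /\ (forall z, S z -> U z \/ V z) /\
      (exists z, S z /\ U z) /\ (exists z, S z /\ V z) /\
      (forall z, S z -> U z -> V z -> False).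

Definition two_connected (S : Z -> Prop) : Prop :=
  forall x0, S x0 -> connected (fun z => S z /\ z <> x0).

Definition diffuse (m : (Z -> Prop) -> R) : Prop :=
  forall x, m (fun z => z = x) = 0.

Definition diam_le (A : Z -> Prop) (r : R) : Prop :=
  forall a b, A a -> A b -> d a b <= r.

Definition dirac (y : Z) (A : Z -> Prop) : R :=
  if excluded_middle_informative (A y) then 1 else 0.

End Defs.

(* Main.v *)
Require Import Defs.
From Stdlib Require Import Reals List ClassicalDescription.
From Coquelicot Require Import Coquelicot.
From Stdlib Require Import Lra Lia Classical ClassicalEpsilon FunctionalExtensionality PropExtensionality.
Open Scope R_scope.

Lemma set_ext {Z : Type} (A B : Z -> Prop) : (forall z, A z <-> B z) -> A = B.
Proof.
  intro H. apply functional_extensionality. intro z. apply propositional_extensionality. apply H.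
Qed.

Section Basics.
Variable Z : Type.
Variable d : Z -> Z -> R.
Hypothesis Hm : is_metric d.

Lemma d_nonneg x y : 0 <= d x y. Proof. destruct Hm as [H _]. apply H. Qed.
Lemma d_refl x : d x x = 0. Proof. destruct Hm as [_ [H _]]. apply H; reflexivity. Qed.
Lemma d_eq0 x y : d x y = 0 -> x = y. Proof. destruct Hm as [_ [H _]]. apply H. Qed.
Lemma d_sym x y : d x y = d y x. Proof. destruct Hm as [_ [_ [H _]]]. apply H. Qed.
Lemma d_tri x y z : d x z <= d x y + d y z. Proof. destruct Hm as [_ [_ [_ H]]]. apply H. Qed.

Definition closedZ (K : Z -> Prop) : Prop :=
  forall z, (forall e, 0 < e -> exists w, K w /\ d z w < e) -> K z.

Lemma fold_max_ge {I : Type} (f : I -> nat) (l : list I) i :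
  In i l -> (f i <= fold_right (fun j acc => Nat.max (f j) acc) 0%nat l)%nat.
Proof.
  induction l as [|a l IH]; simpl; [tauto|]. intros [->|H]; [lia|]. specialize (IH H). lia.
Qed.

Lemma open_ball x r : is_open d (fun z => d x z < r).
Proof.
  intros z Hz. exists (r - d x z). split; [lra|]. intros w Hw.
  pose proof (d_tri x z w). lra.
Qed.

Lemma open_ball' x r : is_open d (fun z => d z x < r).
Proof.
  intros z Hz. exists (r - d z x). split; [lra|]. intros w Hw.
  pose proof (d_tri w z x). rewrite (d_sym w z) in H. lra.
Qed.

Lemma open_far x c : is_open d (fun z => c < d x z).
Proof.
  intros z Hz. exists (d x z - c). split; [lra|]. intros w Hw.
  pose proof (d_tri x w z). rewrite (d_sym w z) in H. lra.
Qed.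

Lemma open_nbhd A e : is_open d (nbhd d A e).
Proof.
  intros z [a [Ha Hz]]. exists (e - d z a). split; [lra|]. intros w Hw.
  exists a. split; auto. pose proof (d_tri w z a). rewrite (d_sym w z) in H. lra.
Qed.

Lemma open_empty : is_open d (fun _ => False).
Proof. intros z []. Qed.

Lemma compact_closed K : is_compact d K -> closedZ K.
Proof.
  intros HK z Hz. apply NNPP; intro Hn.
  destruct (HK nat (fun m w => / INR (S m) < d z w)) as [l Hl].
  - intro m. apply open_far.
  - intros w Hw. assert (Hp : 0 < d z w).
    { destruct (d_nonneg z w) as [H|H]; auto. exfalso. apply Hn. symmetry in H. apply d_eq0 in H. subst; auto. }
    destruct (archimed_cor1 (d z w) Hp) as [m [Hm1 Hm2]].
    exists m. eapply Rle_lt_trans; [|exact Hm1]. rewrite S_INR.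
    apply Rinv_le_contravar; [apply lt_0_INR; lia|]. lra.
  - set (M := fold_right (fun j acc => Nat.max j acc) 0%nat l).
    assert (HM : 0 < / INR (S M)) by (apply Rinv_0_lt_compat, lt_0_INR; lia).
    destruct (Hz _ HM) as [w [Kw Hw]].
    destruct (Hl w Kw) as [m [Hin Hm']].
    pose proof (fold_max_ge (fun j => j) l m Hin) as Hle. simpl in Hle. fold M in Hle.
    assert (/ INR (S M) <= / INR (S m)).
    { apply Rinv_le_contravar; [apply lt_0_INR; lia|]. apply le_INR; lia. }
    lra.
Qed.

Lemma cluster K (Q : nat -> Z -> Prop) : is_compact d K ->
  (forall N, exists n u, (N <= n)%nat /\ Q n u /\ K u) ->
  exists x, K x /\ forall r, 0 < r -> forall N, exists n u, (N <= n)%nat /\ Q n u /\ d u x < r.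
Proof.
  intros HK HQ. apply NNPP; intro Hn.
  assert (Hx : forall x, K x -> exists r N, 0 < r /\ forall n u, (N <= n)%nat -> Q n u -> r <= d u x).
  { intros x Kx. apply NNPP; intro H2. apply Hn. exists x. split; auto.
    intros r Hr N. apply NNPP; intro H3. apply H2. exists r, N. split; auto.
    intros n u HN HQu. apply Rnot_lt_le. intro H4. apply H3. exists n, u. auto. }
  destruct (HK (Z * R * nat)%type
     (fun i z => d z (fst (fst i)) < snd (fst i) /\ K (fst (fst i)) /\ 0 < snd (fst i) /\
        forall n u, (snd i <= n)%nat -> Q n u -> snd (fst i) <= d u (fst (fst i)))) as [l Hl].
  - intros [[x r] N]. simpl.
    destruct (classic (K x /\ 0 < r /\ forall n u, (N <= n)%nat -> Q n u -> r <= d u x)) as [Hc|Hc].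
    + intros z [Hz _]. destruct (open_ball' x r z Hz) as [e [He Hw]]. exists e. split; [exact He|].
      intros w Hw'. split; [apply Hw; exact Hw'|exact Hc].
    + intros z [_ Hz]. exfalso. tauto.
  - intros z Kz. destruct (Hx z Kz) as [r [N [Hr HN]]]. exists (z, r, N). simpl.
    rewrite d_refl. auto.
  - set (M := fold_right (fun j acc => Nat.max (snd j) acc) 0%nat l).
    destruct (HQ M) as [n [u [HMn [Qu Ku]]]].
    destruct (Hl u Ku) as [[[x r] N] [Hin [H1 [_ [_ H2]]]]]. simpl in *.
    pose proof (fold_max_ge snd l _ Hin) as Hle. simpl in Hle. fold M in Hle.
    specialize (H2 n u ltac:(lia) Qu). lra.
Qed.

Lemma borel_open U : is_open d U -> borel d U.
Proof. intros HU S HS HSo. apply HSo, HU. Qed.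

Lemma borel_compl A : borel d A -> borel d (fun z => ~ A z).
Proof. intros HA S HS HSo. pose proof HS as HS'. destruct HS' as [_ [Hc _]]. apply Hc, HA; auto. Qed.

Lemma borel_cunion (A : nat -> Z -> Prop) : (forall k, borel d (A k)) -> borel d (fun z => exists k, A k z).
Proof. intros HA S HS HSo. pose proof HS as HS'. destruct HS' as [_ [_ Hu]]. apply Hu. intro k. apply HA; auto. Qed.

Lemma borel_ext A B : borel d A -> (forall z, A z <-> B z) -> borel d B.
Proof. intros HA H. rewrite <- (set_ext A B H). auto. Qed.

Lemma borel_empty : borel d (fun _ => False).
Proof. apply borel_open, open_empty. Qed.

Lemma borel_union A B : borel d A -> borel d B -> borel d (fun z => A z \/ B z).
Proof.
  intros HA HB. apply borel_ext with (fun z => exists k, (fun k => match k with O => A | _ => B end) k z).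
  - apply borel_cunion. intros [|k]; auto.
  - intro z; split. intros [[|k] H]; auto. intros [H|H]; [exists O|exists 1%nat]; auto.
Qed.

Lemma borel_inter A B : borel d A -> borel d B -> borel d (fun z => A z /\ B z).
Proof.
  intros HA HB. apply borel_ext with (fun z => ~ ((fun z => ~ A z) z \/ (fun z => ~ B z) z)).
  - apply borel_compl, borel_union; apply borel_compl; auto.
  - intro z; split; [|tauto]. intro H. split; apply NNPP; tauto.
Qed.

Lemma borel_closed K : closedZ K -> borel d K.
Proof.
  intro HK. apply borel_ext with (fun z => ~ (fun z => ~ K z) z).
  - apply borel_compl, borel_open. intros z Hz. apply NNPP; intro H. apply Hz, HK.
    intros e He. apply NNPP; intro H2. apply H. exists e. split; auto.
    intros w Hw Kw. apply H2. exists w; auto.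
  - intro z; split; [apply NNPP|tauto].
Qed.

Lemma borel_compact K : is_compact d K -> borel d K.
Proof. intro; apply borel_closed, compact_closed; auto. Qed.

End Basics.

Lemma inv_small t : 0 < t -> exists K, / INR (S K) < t.
Proof.
  intro Ht. destruct (archimed_cor1 t Ht) as [N [H1 H2]]. exists (pred N).
  replace (S (pred N)) with N by lia. exact H1.
Qed.

Lemma inv_pos K : 0 < / INR (S K).
Proof. apply Rinv_0_lt_compat, lt_0_INR; lia. Qed.

Lemma inv_le K L : (K <= L)%nat -> / INR (S L) <= / INR (S K).
Proof. intro H. apply Rinv_le_contravar; [apply lt_0_INR; lia|]. apply le_INR; lia. Qed.

Lemma series_finite (a : nat -> R) N : (forall k, (N < k)%nat -> a k = 0) -> is_series a (sum_n a N).
Proof.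
  intro H. change (is_lim_seq (sum_n a) (Finite (sum_n a N))).
  apply is_lim_seq_ext_loc with (fun _ => sum_n a N); [|apply is_lim_seq_const].
  exists N. intros n Hn. induction Hn as [|n Hn IH]; auto.
  rewrite sum_Sn, <- IH, H by lia. unfold plus; simpl. symmetry. exact (Rplus_0_r _).

Qed.

Fixpoint psum (a : nat -> R) (K : nat) : R :=
  match K with O => 0 | S K => psum a K + a K end.

Section Meas.
Variable Z : Type.
Variable d : Z -> Z -> R.
Hypothesis Hm : is_metric d.
Variable m : (Z -> Prop) -> R.
Hypothesis Hmu : finite_borel_measure d m.

Lemma m_ext A B : (forall z, A z <-> B z) -> m A = m B.
Proof. intro H. rewrite (set_ext A B H). reflexivity. Qed.

Lemma m_nonneg A : borel d A -> 0 <= m A.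
Proof. destruct Hmu as [H _]. apply H. Qed.

Lemma m_null A : (forall z, ~ A z) -> m A = 0.
Proof. intro H. destruct Hmu as [_ [H0 _]]. rewrite <- H0. apply m_ext. intro z; split; [apply H|intros []]. Qed.

Lemma m_cunion (A : nat -> Z -> Prop) : (forall k, borel d (A k)) ->
  (forall j k z, j <> k -> A j z -> A k z -> False) ->
  is_series (fun k => m (A k)) (m (fun z => exists k, A k z)).
Proof. destruct Hmu as [_ [_ H]]. apply H. Qed.

Lemma m_add2 A B : borel d A -> borel d B -> (forall z, A z -> B z -> False) ->
  m (fun z => A z \/ B z) = m A + m B.
Proof.
  intros HA HB HAB.
  set (E := fun k => match k with O => A | 1%nat => B | _ => fun _ : Z => False end).
  assert (H1 : is_series (fun k => m (E k)) (m (fun z => exists k, E k z))).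
  { apply m_cunion.
    - intros [|[|k]]; simpl; auto. apply borel_empty; auto.
    - intros [|[|j]] [|[|k]] z Hjk; simpl; try tauto; try lia; intros; eauto. }
  assert (H2 : is_series (fun k => m (E k)) (sum_n (fun k => m (E k)) 1)).
  { apply series_finite. intros [|[|k]] Hk; try lia. simpl. apply m_null. auto. }
  apply is_series_unique in H1. apply is_series_unique in H2. rewrite H1 in H2.
  rewrite sum_Sn, sum_O in H2. unfold plus in H2; simpl in H2.
  rewrite <- H2. apply m_ext. intro z; split.
  - intros [H|H]; [exists O|exists 1%nat]; auto.
  - intros [[|[|k]] H]; simpl in H; tauto.
Qed.

Lemma m_mono A B : borel d A -> borel d B -> (forall z, A z -> B z) -> m A <= m B.
Proof.
  intros HA HB HAB.
  assert (HBA : borel d (fun z => B z /\ ~ A z)) by (apply borel_inter, borel_compl; auto).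
  rewrite (m_ext B (fun z => A z \/ (B z /\ ~ A z))).
  - rewrite m_add2; auto. pose proof (m_nonneg _ HBA). lra. tauto.
  - intro z; split; [|intros [H|[H _]]; auto]. intro Hz. destruct (classic (A z)); auto.
Qed.

Lemma m_restrict A C : borel d A -> borel d C -> m (fun z => ~ C z) = 0 ->
  m A = m (fun z => A z /\ C z).
Proof.
  intros HA HC H0.
  assert (HAC : borel d (fun z => A z /\ C z)) by (apply borel_inter; auto).
  assert (HAN : borel d (fun z => A z /\ ~ C z)) by (apply borel_inter, borel_compl; auto).
  rewrite (m_ext A (fun z => (A z /\ C z) \/ (A z /\ ~ C z))).
  - rewrite m_add2; auto; [|tauto].
    assert (m (fun z => A z /\ ~ C z) <= m (fun z => ~ C z)).
    { apply m_mono; auto. apply borel_compl; auto. tauto. }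
    pose proof (m_nonneg _ HAN). lra.
  - intro z; split; [|tauto]. intro Hz. destruct (classic (C z)); auto.
Qed.

Lemma small_ball_at x : m (fun z => z = x) = 0 ->
  forall tau, 0 < tau -> exists r, 0 < r /\ m (fun z => d x z < r) < tau.
Proof.
  intros Hx tau Htau.
  set (B := fun k z => d x z < / INR (S k)).
  set (D := fun k z => B k z /\ ~ B (S k) z).
  assert (HBb : forall k, borel d (B k)) by (intro k; apply borel_open, open_ball; auto).
  assert (HDb : forall k, borel d (D k)) by (intro k; apply borel_inter; auto; apply borel_compl; auto).
  assert (Bdec : forall k z, B (S k) z -> B k z).
  { intros k z H. unfold B in *. pose proof (inv_le k (S k) ltac:(lia)). lra. }
  assert (Bdec0 : forall k z, B k z -> B O z).
  { induction k; auto. }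
  assert (Hstep : forall k, m (B k) = m (D k) + m (B (S k))).
  { intro k. rewrite <- m_add2; auto.
    - apply m_ext. intro z; split.
      + intro H. destruct (classic (B (S k) z)); [right|left]; auto. split; auto.
      + intros [[H _]|H]; auto.
    - intros z [_ H1] H2. auto. }
  assert (Hrel : forall K, m (B O) = psum (fun k => m (D k)) K + m (B K)).
  { induction K; simpl; [lra|]. rewrite IHK, Hstep. ring. }
  set (E := fun k => match k with O => fun z => z = x | S j => D j end).
  assert (HE : is_series (fun k => m (E k)) (m (fun z => exists k, E k z))).
  { apply m_cunion.
    - intros [|k]; simpl; auto. apply borel_closed; auto. intros z Hz.
      apply NNPP; intro Hne. assert (Hp : 0 < d z x).
      { destruct (d_nonneg Z d Hm z x) as [H|H]; auto. exfalso. apply Hne. symmetry in H. apply (d_eq0 Z d Hm); auto. }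
      destruct (Hz _ Hp) as [w [-> Hw]]. lra.
    - assert (Hdisj : forall j k z, (j < k)%nat -> D j z -> D k z -> False).
      { intros j k z Hjk [_ H1] [H2 _]. apply H1. clear H1.
        induction Hjk; auto. }
      intros [|j] [|k] z Hjk; simpl; intros H1 H2; try lia.
      + subst. destruct H2 as [_ H3]. apply H3. unfold B. rewrite d_refl by auto. apply inv_pos.
      + subst. destruct H1 as [_ H1]. apply H1. unfold B. rewrite d_refl by auto. apply inv_pos.
      + destruct (Nat.lt_total j k) as [H|[H|H]]; [eapply Hdisj; eauto|lia|eapply Hdisj; eauto].
  }
  assert (HU : m (fun z => exists k, E k z) = m (B O)).
  { apply m_ext. intro z; split.
    - intros [[|k] H]; simpl in H.
      + subst. unfold B. rewrite d_refl by auto. apply inv_pos.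
      + destruct H as [H _]. eauto.
    - intro H0. destruct (classic (z = x)) as [Hzx|Hzx]; [exists O; exact Hzx|].
      assert (Hp : 0 < d x z).
      { destruct (d_nonneg Z d Hm x z) as [H|H]; auto. exfalso. apply Hzx. symmetry. apply (d_eq0 Z d Hm); auto. }
      destruct (inv_small _ Hp) as [K HK].
      assert (Hgen : forall j, B O z -> ~ B j z -> exists k, D k z).
      { induction j; intros H1 H2; [tauto|]. destruct (classic (B j z)).
        - exists j. split; auto.
        - apply IHj; auto. }
      destruct (Hgen K H0) as [k Hk]. unfold B. lra. exists (S k). exact Hk. }
  rewrite HU in HE.
  assert (Hps : forall K, sum_n (fun k => m (E k)) K = psum (fun k => m (D k)) K + m (E O)).
  { induction K. rewrite sum_O. simpl. ring. rewrite sum_Sn, IHK. unfold plus; simpl. ring. }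
  assert (HE0 : m (E O) = 0) by (simpl; auto).
  assert (Hlim : is_lim_seq (fun K => m (B K)) 0).
  { change (is_lim_seq (sum_n (fun k => m (E k))) (Finite (m (B O)))) in HE.
    apply is_lim_seq_ext with (fun K => m (B O) - sum_n (fun k => m (E k)) K).
    - intro K. rewrite Hps, HE0, (Hrel K). ring.
    - replace 0 with (m (B O) - m (B O)) by ring. apply is_lim_seq_minus'; auto. apply is_lim_seq_const. }
  apply is_lim_seq_spec in Hlim. destruct (Hlim (mkposreal _ Htau)) as [N HN].
  exists (/ INR (S N)). split; [apply inv_pos|].
  specialize (HN N (le_n _)). simpl in HN. unfold B in HN.
  apply Rabs_lt_between in HN. lra.
Qed.

Lemma small_ball_unif : is_compact d (fun _ => True) -> (forall x, m (fun z => z = x) = 0) ->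
  forall tau, 0 < tau -> exists r, 0 < r /\ forall x, m (fun z => d x z < r) < tau.
Proof.
  intros HZ Hdf tau Htau. apply NNPP; intro Hn.
  assert (HQ : forall N, exists n u, (N <= n)%nat /\ tau <= m (fun z => d u z < / INR (S n)) /\ True).
  { intro N. exists N. apply NNPP; intro H. apply Hn. exists (/ INR (S N)). split; [apply inv_pos|].
    intro x. apply Rnot_le_lt. intro H2. apply H. exists x. auto. }
  destruct (cluster Z d Hm _ _ HZ HQ) as [x [_ Hx]].
  destruct (small_ball_at x (Hdf x) tau Htau) as [r0 [Hr0 Hm0]].
  destruct (inv_small (r0/2) ltac:(lra)) as [N HN].
  destruct (Hx (r0/2) ltac:(lra) N) as [n [u [HNn [Hq Hd]]]].
  assert (m (fun z => d u z < / INR (S n)) <= m (fun z => d x z < r0)).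
  { apply m_mono; try (apply borel_open, open_ball; auto).
    intros z Hz. pose proof (d_tri Z d Hm x u z). rewrite (d_sym Z d Hm x u) in H.
    pose proof (inv_le _ _ HNn). lra. }
  lra.
Qed.

End Meas.

Definition closedR (F : R -> Prop) : Prop :=
  forall t, (forall e, 0 < e -> exists s, F s /\ Rabs (s - t) < e) -> F t.

Lemma sup_closed F lo hi : closedR F -> (exists s, F s /\ lo <= s <= hi) ->
  exists t, F t /\ lo <= t <= hi /\ forall s, F s -> lo <= s <= hi -> s <= t.
Proof.
  intros HF Hne.
  set (E := fun s => F s /\ lo <= s <= hi).
  assert (Hb : bound E) by (exists hi; intros s [_ Hs]; lra).
  destruct (completeness E Hb Hne) as [t [Hub Hlub]].
  destruct Hne as [s0 [Fs0 Hs0]].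
  assert (Hs0t : s0 <= t) by (apply Hub; split; auto).
  assert (Hthi : t <= hi) by (apply Hlub; intros s [_ Hs]; lra).
  exists t. split; [|split; [lra|intros s Fs Hs; apply Hub; split; auto]].
  apply HF. intros e He. apply NNPP; intro Hn.
  assert (t <= t - e); [|lra].
  apply Hlub. intros s [Fs Hs]. apply Rnot_lt_le. intro H. apply Hn. exists s. split; auto.
  assert (s <= t) by (apply Hub; split; auto). rewrite Rabs_left1; lra.
Qed.

Lemma inf_closed F lo hi : closedR F -> (exists s, F s /\ lo <= s <= hi) ->
  exists t, F t /\ lo <= t <= hi /\ forall s, F s -> lo <= s <= hi -> t <= s.
Proof.
  intros HF [s0 [Fs0 Hs0]].
  destruct (sup_closed (fun s => F (- s)) (- hi) (- lo)) as [t [Ft [Ht Hmax]]].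
  - intros t Ht. apply HF. intros e He. destruct (Ht e He) as [s [Fs Hs]].
    exists (- s). split; auto. rewrite <- Rabs_Ropp. replace (- (- s - - t)) with (s - t) by ring. auto.
  - exists (- s0). split; [rewrite Ropp_involutive; auto|lra].
  - exists (- t). split; [auto|split; [lra|]]. intros s Fs Hs.
    assert (- s <= t); [|lra]. apply Hmax; [rewrite Ropp_involutive; auto|lra].
Qed.

Section Sierp.
Variable F : nat -> R -> Prop.
Variables a0 b0 : R.
Hypothesis Hcl : forall k, closedR (F k).
Hypothesis Hcov : forall t, a0 <= t <= b0 -> exists k, F k t.
Hypothesis Hdisj : forall j k t, j <> k -> F j t -> F k t -> False.

Lemma two_in_interior a b p q : a0 <= a -> a < b -> b <= b0 -> F p a -> F q b -> p <> q ->
  exists u v r s, a < u < b /\ a < v < b /\ F r u /\ F s v /\ r <> s.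
Proof.
  intros Ha Hab Hb Fp Fq Hpq.
  destruct (Hcov ((a + b) / 2)) as [r Fr]; [lra|].
  destruct (classic (exists v s, a < v < b /\ F s v /\ r <> s)) as [[v [s [Hv [Fs Hrs]]]]|Hn].
  - exists ((a+b)/2), v, r, s. repeat split; auto; lra.
  - exfalso.
    assert (Hall : forall t, a < t < b -> F r t).
    { intros t Ht. destruct (Hcov t) as [k Fk]; [lra|].
      destruct (classic (r = k)) as [->|Hrk]; auto. exfalso. apply Hn. exists t, k. auto. }
    assert (Fra : F r a).
    { apply Hcl. intros e He. exists (a + Rmin (e/2) ((b - a)/2)). split.
      - apply Hall. assert (0 < Rmin (e/2) ((b-a)/2)) by (apply Rmin_glb_lt; lra).
        pose proof (Rmin_r (e/2) ((b-a)/2)). lra.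
      - pose proof (Rmin_l (e/2) ((b-a)/2)). assert (0 < Rmin (e/2) ((b-a)/2)) by (apply Rmin_glb_lt; lra).
        rewrite Rabs_right; lra. }
    assert (Frb : F r b).
    { apply Hcl. intros e He. exists (b - Rmin (e/2) ((b - a)/2)). split.
      - apply Hall. assert (0 < Rmin (e/2) ((b-a)/2)) by (apply Rmin_glb_lt; lra).
        pose proof (Rmin_r (e/2) ((b-a)/2)). lra.
      - pose proof (Rmin_l (e/2) ((b-a)/2)). assert (0 < Rmin (e/2) ((b-a)/2)) by (apply Rmin_glb_lt; lra).
        rewrite Rabs_left; lra. }
    destruct (classic (r = p)) as [<-|Hrp]; [|eapply Hdisj; [exact Hrp|exact Fra|exact Fp]].
    eapply Hdisj; [exact Hpq|exact Frb|exact Fq].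
Qed.

Lemma step a b p q k : a0 <= a -> a < b -> b <= b0 -> F p a -> F q b -> p <> q ->
  exists a' b', a < a' /\ a' < b' /\ b' < b /\ (exists p' q', p' <> q' /\ F p' a' /\ F q' b') /\
    forall t, a' < t < b' -> ~ F k t.
Proof.
  intros Ha Hab Hb Fp Fq Hpq.
  assert (Hred : exists a1 b1, a <= a1 /\ a1 < b1 /\ b1 <= b /\ (exists p' q', p' <> q' /\ F p' a1 /\ F q' b1) /\
    forall t, a1 < t < b1 -> ~ F k t).
  { destruct (classic (exists w, a < w < b /\ F k w)) as [[w [Hw Fw]]|Hn].
    - destruct (classic (k = p)) as [->|Hkp].
      + destruct (sup_closed (F p) w b (Hcl p)) as [a1 [Fa1 [Ha1 Hmax]]]; [exists w; split; auto; lra|].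
        assert (a1 < b) by (destruct (Req_dec a1 b) as [E|E]; [subst; exfalso; eapply Hdisj; [exact Hpq|exact Fa1|exact Fq]|lra]).
        destruct (inf_closed (F q) a1 b (Hcl q)) as [b1 [Fb1 [Hb1 Hmin]]]; [exists b; split; auto; lra|].
        assert (a1 < b1) by (destruct (Req_dec a1 b1) as [E|E]; [subst; exfalso; eapply Hdisj; [exact Hpq|exact Fa1|exact Fb1]|lra]).
        exists a1, b1. repeat split; try lra. exists p, q. auto.
        intros t Ht Ft. assert (t <= a1) by (apply Hmax; auto; lra). lra.
      + destruct (sup_closed (F p) a w (Hcl p)) as [a1 [Fa1 [Ha1 Hmax]]]; [exists a; split; auto; lra|].
        assert (a1 < w) by (destruct (Req_dec a1 w) as [E|E]; [subst; exfalso; eapply Hdisj; [exact Hkp|exact Fw|exact Fa1]|lra]).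
        destruct (inf_closed (F k) a1 w (Hcl k)) as [b1 [Fb1 [Hb1 Hmin]]]; [exists w; split; auto; lra|].
        assert (a1 < b1) by (destruct (Req_dec a1 b1) as [E|E]; [subst; exfalso; eapply Hdisj; [exact Hkp|exact Fb1|exact Fa1]|lra]).
        exists a1, b1. repeat split; try lra. exists p, k. auto.
        intros t Ht Ft. assert (b1 <= t) by (apply Hmin; auto; lra). lra.
    - exists a, b. repeat split; try lra. exists p, q. auto.
      intros t Ht Ft. apply Hn. exists t. auto. }
  destruct Hred as [a1 [b1 [Ha1 [Hab1 [Hb1 [[p' [q' [Hpq' [Fp' Fq']]]] Hk]]]]]].
  destruct (two_in_interior a1 b1 p' q') as [u [v [r [s [Hu [Hv [Fr [Fs Hrs]]]]]]]]; auto; try lra.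
  destruct (Rtotal_order u v) as [Huv|[Huv|Huv]].
  - exists u, v. repeat split; try lra. exists r, s; auto. intros t Ht. apply Hk. lra.
  - subst. exfalso. eapply Hdisj; eauto.
  - exists v, u. repeat split; try lra. exists s, r; auto. intros t Ht. apply Hk. lra.
Qed.

Definition St := {ab : R * R | a0 <= fst ab /\ fst ab < snd ab /\ snd ab <= b0 /\
   exists p q, p <> q /\ F p (fst ab) /\ F q (snd ab)}.

Lemma step_sig (k : nat) (s : St) : exists s' : St,
  fst (proj1_sig s) < fst (proj1_sig s') /\ snd (proj1_sig s') < snd (proj1_sig s) /\
  forall t, fst (proj1_sig s') < t < snd (proj1_sig s') -> ~ F k t.
Proof.
  destruct s as [[a b] [Ha [Hab [Hb [p [q [Hpq [Fp Fq]]]]]]]]. simpl in *.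
  destruct (step a b p q k Ha Hab Hb Fp Fq Hpq) as [a' [b' [H1 [H2 [H3 [H4 H5]]]]]].
  assert (Hs' : a0 <= fst (a', b') /\ fst (a', b') < snd (a', b') /\ snd (a', b') <= b0 /\
   exists p q, p <> q /\ F p (fst (a', b')) /\ F q (snd (a', b'))) by (simpl; repeat split; auto; lra).
  exists (exist _ (a', b') Hs'). simpl. auto.
Qed.

Theorem sierpinski p q : a0 < b0 -> F p a0 -> F q b0 -> p <> q -> False.
Proof.
  intros Hab Fp Fq Hpq.
  assert (Hs0 : a0 <= fst (a0, b0) /\ fst (a0, b0) < snd (a0, b0) /\ snd (a0, b0) <= b0 /\
   exists p q, p <> q /\ F p (fst (a0, b0)) /\ F q (snd (a0, b0))) by (simpl; repeat split; try lra; eauto).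
  set (s0 := exist _ (a0, b0) Hs0 : St).
  set (f := fun k s => proj1_sig (constructive_indefinite_description _ (step_sig k s))).
  assert (Hf : forall k s, fst (proj1_sig s) < fst (proj1_sig (f k s)) /\ snd (proj1_sig (f k s)) < snd (proj1_sig s) /\
    forall t, fst (proj1_sig (f k s)) < t < snd (proj1_sig (f k s)) -> ~ F k t).
  { intros k s. unfold f. destruct (constructive_indefinite_description _ (step_sig k s)) as [s' Hs']. exact Hs'. }
  set (sq := nat_rect (fun _ => St) s0 (fun k s => f k s)).
  set (A := fun k => fst (proj1_sig (sq k))). set (B := fun k => snd (proj1_sig (sq k))).
  assert (HAB : forall k, A k < B k).
  { intro k. unfold A, B. destruct (sq k) as [ab Hab']. simpl. tauto. }
  assert (HAi : forall k, A k < A (S k)) by (intro k; apply (Hf k (sq k))).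
  assert (HBd : forall k, B (S k) < B k) by (intro k; apply (Hf k (sq k))).
  assert (HAv : forall k t, A (S k) < t < B (S k) -> ~ F k t) by (intro k; apply (Hf k (sq k))).
  assert (HAmon : forall j k, (j <= k)%nat -> A j <= A k).
  { intros j k H. induction H; [lra|]. specialize (HAi m). lra. }
  assert (HBmon : forall j k, (j <= k)%nat -> B k <= B j).
  { intros j k H. induction H; [lra|]. specialize (HBd m). lra. }
  assert (HAB' : forall j k, A j < B k).
  { intros j k. destruct (Nat.le_ge_cases j k) as [H|H].
    - specialize (HAmon _ _ H). specialize (HAB k). lra.
    - specialize (HBmon _ _ H). specialize (HAB j). lra. }
  set (E := fun x => exists k, x = A k).
  assert (HbE : bound E) by (exists (B O); intros x [k ->]; left; apply HAB').
  destruct (completeness E HbE) as [t [Hub Hlub]]; [exists (A O); exists O; auto|].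
  assert (HAt : forall k, A k <= t) by (intro k; apply Hub; exists k; auto).
  assert (HtB : forall k, t <= B k) by (intro k; apply Hlub; intros x [j ->]; left; apply HAB').
  assert (Ha0 : A O = a0) by reflexivity. assert (Hb0 : B O = b0) by reflexivity.
  destruct (Hcov t) as [k Fk].
  - split. specialize (HAt O). lra. specialize (HtB O). lra.
  - apply (HAv k t); auto. split.
    + specialize (HAi (S k)). specialize (HAt (S (S k))). lra.
    + specialize (HBd (S k)). specialize (HtB (S (S k))). lra.
Qed.

End Sierp.

Section Geo.
Variable Z : Type.
Variable d : Z -> Z -> R.
Hypothesis Hm : is_metric d.
Variable X : Z -> Prop.
Variable Y : nat -> Z -> Prop.
Hypothesis HXcl : closedZ Z d X.
Hypothesis HYcl : forall i, closedZ Z d (Y i).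
Hypothesis HYdisj : forall i j z, i <> j -> Y i z -> Y j z -> False.
Hypothesis Hgeo : geodesic d (fun z => X z \/ exists j, Y j z).

Lemma geo_split i w b : Y i w -> (X b \/ exists j, Y j b) -> ~ Y i b ->
  exists pt, X pt /\ Y i pt /\ d w b = d w pt + d pt b.
Proof.
  intros Yw Zb Nb.
  assert (Hwb : w <> b) by (intro; subst; auto).
  assert (HL : 0 < d w b).
  { destruct (d_nonneg Z d Hm w b) as [H|H]; auto. symmetry in H. apply (d_eq0 Z d Hm) in H. tauto. }
  destruct (Hgeo w b) as [g [Hg0 [HgL [HgZ Hgi]]]]; [right; exists i; auto|auto|].
  set (L := d w b) in *.
  set (S := fun t => 0 <= t <= L /\ forall s, 0 <= s <= t -> Y i (g s)).
  assert (HbS : bound S) by (exists L; intros t [Ht _]; lra).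
  assert (HS0 : S 0).
  { split; [lra|]. intros s Hs. replace s with 0 by lra. rewrite Hg0; auto. }
  destruct (completeness S HbS (ex_intro _ 0 HS0)) as [ts [Hub Hlub]].
  assert (Hts0 : 0 <= ts) by (apply Hub; auto).
  assert (HtsL : ts <= L) by (apply Hlub; intros t [Ht _]; lra).
  assert (H1 : forall s, 0 <= s < ts -> Y i (g s)).
  { intros s Hs. apply NNPP; intro Hn. assert (ts <= s); [|lra].
    apply Hlub. intros t [Ht Ht2]. apply Rnot_lt_le. intro Hst. apply Hn. apply Ht2. lra. }
  assert (Hiso : forall s t, 0 <= s <= L -> 0 <= t <= L -> d (g s) (g t) = Rabs (s - t)) by exact Hgi.
  assert (H2 : Y i (g ts)).
  { destruct (Req_dec ts 0) as [E|E].
    - rewrite E, Hg0; auto.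
    - apply HYcl. intros e He. exists (g (ts - Rmin (e/2) ts)).
      assert (0 < Rmin (e/2) ts) by (apply Rmin_glb_lt; lra).
      pose proof (Rmin_l (e/2) ts). pose proof (Rmin_r (e/2) ts).
      split; [apply H1; lra|]. rewrite Hiso by lra. rewrite Rabs_right; lra. }
  assert (HtsL' : ts < L).
  { destruct (Req_dec ts L) as [E|E]; [|lra]. exfalso. apply Nb. rewrite <- HgL. fold L. rewrite <- E. auto. }
  destruct (classic (X (g ts))) as [HX|HX].
  - exists (g ts). split; auto. split; auto.
    assert (E1 : d (g 0) (g ts) = ts) by (rewrite Hiso by lra; rewrite Rabs_left1; lra).
    assert (E2 : d (g ts) (g L) = L - ts) by (rewrite Hiso by lra; rewrite Rabs_left1; lra).
    rewrite Hg0 in E1. rewrite HgL in E2. rewrite E1, E2. ring.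
  - assert (Hr : exists r, 0 < r /\ forall z, d (g ts) z < r -> ~ X z).
    { apply NNPP; intro Hn. apply HX, HXcl. intros e He. apply NNPP; intro H3. apply Hn.
      exists e. split; auto. intros z Hz Xz. apply H3. exists z. auto. }
    destruct Hr as [r [Hr HrX]].
    set (t1' := Rmin (ts + r/2) L).
    assert (Ht1' : ts < t1' <= L).
    { unfold t1'. split; [apply Rmin_glb_lt; lra|apply Rmin_r]. }
    assert (Ht1r : t1' <= ts + r/2) by apply Rmin_l.
    assert (Hex : exists t1, ts < t1 <= t1' /\ ~ Y i (g t1)).
    { apply NNPP; intro Hn. assert (S t1'); [|assert (t1' <= ts) by (apply Hub; auto); lra].
      split; [lra|]. intros s Hs. destruct (Rtotal_order s ts) as [H|[H|H]].
      - apply H1; lra.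
      - rewrite H; auto.
      - apply NNPP; intro H3. apply Hn. exists s. split; [lra|auto]. }
    destruct Hex as [t1 [Ht1 Nt1]].
    assert (Hnx : forall t, ts <= t <= t1 -> ~ X (g t)).
    { intros t Ht. apply HrX. rewrite Hiso by lra. rewrite Rabs_left1; lra. }
    destruct (HgZ t1) as [Xt1|[j Yj]]; [lra|exfalso; apply (Hnx t1); auto; lra|].
    assert (Hij : i <> j) by (intro E; rewrite E in Nt1; auto).
    exfalso.
    apply (sierpinski (fun k t => ts <= t <= t1 /\ Y k (g t)) ts t1) with i j; auto.
    + intros k t Ht.
      assert (Hint : ts <= t <= t1).
      { split.
        - apply Rnot_lt_le. intro H. destruct (Ht (ts - t)) as [s [[Hs _] Hs']]; [lra|].
          rewrite Rabs_right in Hs'; lra.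
        - apply Rnot_lt_le. intro H. destruct (Ht (t - t1)) as [s [[Hs _] Hs']]; [lra|].
          rewrite Rabs_left in Hs'; lra. }
      split; auto. apply HYcl. intros e He. destruct (Ht e He) as [s [[Hs Ys] Hs']].
      exists (g s). split; auto. rewrite Hiso by lra. rewrite Rabs_minus_sym. auto.
    + intros t Ht. destruct (HgZ t) as [Xt|[k Yk]]; [lra| |].
      * exfalso. apply (Hnx t); auto.
      * exists k. auto.
    + intros k l t Hkl [_ H3] [_ H4]. eapply HYdisj; eauto.
    + lra.
    + split; [lra|auto].
    + split; [lra|auto].
Qed.

End Geo.

Section Chains.
Variable Z : Type.
Variable d : Z -> Z -> R.
Hypothesis Hm : is_metric d.
Variable Zinf : Z -> Prop.
Variable x0 : Z.
Hypothesis HZinfc : is_compact d Zinf.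
Hypothesis H2c : connected d (fun z => Zinf z /\ z <> x0).
Hypothesis Hloc : forall z w r, Zinf z -> Zinf w -> d z w < r -> forall e, 0 < e ->
  exists m (f : nat -> Z), f O = z /\ f m = w /\ (forall j, (j <= m)%nat -> Zinf (f j) /\ d z (f j) < r + e) /\
    (forall j, (j < m)%nat -> d (f j) (f (S j)) < e).

Definition chain (rho e : R) (p q : Z) : Prop :=
  exists m (f : nat -> Z), f O = p /\ f m = q /\ (forall j, (j <= m)%nat -> Zinf (f j) /\ rho <= d (f j) x0) /\
    (forall j, (j < m)%nat -> d (f j) (f (S j)) < e).

Lemma chain_mono rho rho' e p q : rho' <= rho -> chain rho e p q -> chain rho' e p q.
Proof.
  intros H [m [f [H0 [H1 [H2 H3]]]]]. exists m, f. repeat split; auto.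
  - apply H2; auto.
  - pose proof (proj2 (H2 j H4)). lra.
Qed.

Lemma chain_rev rho e p q : chain rho e p q -> chain rho e q p.
Proof.
  intros [m [f [H0 [H1 [H2 H3]]]]]. exists m, (fun j => f (m - j)%nat).
  repeat split.
  - rewrite Nat.sub_0_r; auto.
  - rewrite Nat.sub_diag; auto.
  - apply H2; lia.
  - apply H2; lia.
  - intros j Hj. replace (m - j)%nat with (S (m - S j)) by lia. rewrite (d_sym Z d Hm). apply H3. lia.
Qed.

Lemma chain_app rho e p q r : chain rho e p q -> chain rho e q r -> chain rho e p r.
Proof.
  intros [m1 [f [F0 [F1 [F2 F3]]]]] [m2 [g [G0 [G1 [G2 G3]]]]].
  exists (m1 + m2)%nat, (fun j => if Nat.leb j m1 then f j else g (j - m1)%nat).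
  split; [|split; [|split]].
  - simpl. auto.
  - destruct (Nat.leb_spec (m1 + m2) m1).
    + assert (E : m2 = O) by lia. rewrite E in *. replace (m1 + 0)%nat with m1 by lia. rewrite F1, <- G1, G0; auto.
    + replace (m1 + m2 - m1)%nat with m2 by lia. auto.
  - intros j Hj. destruct (Nat.leb_spec j m1); [apply F2; lia|apply G2; lia].
  - intros j Hj. destruct (Nat.leb_spec j m1); destruct (Nat.leb_spec (S j) m1).
    + apply F3; lia.
    + assert (E : j = m1) by lia. rewrite E in *. replace (S m1 - m1)%nat with 1%nat by lia.
      rewrite F1, <- G0. apply G3. lia.
    + lia.
    + replace (S j - m1)%nat with (S (j - m1)) by lia. apply G3. lia.
Qed.

Definition rel (p q : Z) : Prop := exists rho, 0 < rho /\ forall e, 0 < e -> chain rho e p q.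

Lemma rel_sym p q : rel p q -> rel q p.
Proof. intros [rho [Hr H]]. exists rho. split; auto. intros e He. apply chain_rev; auto. Qed.

Lemma rel_trans p q r : rel p q -> rel q r -> rel p r.
Proof.
  intros [r1 [H1 C1]] [r2 [H2 C2]]. exists (Rmin r1 r2). split; [apply Rmin_glb_lt; auto|].
  intros e He. apply chain_app with q; eapply chain_mono; try apply C1; try apply C2; auto;
  [apply Rmin_l|apply Rmin_r].
Qed.

Lemma dpos z : z <> x0 -> 0 < d z x0.
Proof.
  intro H. destruct (d_nonneg Z d Hm z x0) as [H1|H1]; auto. symmetry in H1. apply (d_eq0 Z d Hm) in H1. tauto.
Qed.

Lemma local_chain z w e : Zinf z -> z <> x0 -> Zinf w -> d z w < d z x0 / 3 -> 0 < e ->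
  chain (d z x0 / 3) e z w.
Proof.
  intros Zz Hz Zw Hzw He. pose proof (dpos z Hz) as Hp.
  destruct (Hloc z w (d z x0 / 3) Zz Zw Hzw (Rmin e (d z x0 / 3))) as [m [f [F0 [F1 [F2 F3]]]]].
  { apply Rmin_glb_lt; lra. }
  exists m, f. repeat split; auto.
  - apply F2; auto.
  - destruct (F2 j H) as [_ Hj]. pose proof (Rmin_r e (d z x0 / 3)).
    pose proof (d_tri Z d Hm z (f j) x0). lra.
  - intros j Hj. specialize (F3 j Hj). pose proof (Rmin_l e (d z x0 / 3)). lra.
Qed.

Lemma local_rel z w : Zinf z -> z <> x0 -> Zinf w -> d z w < d z x0 / 3 -> rel z w.
Proof.
  intros. exists (d z x0 / 3). pose proof (dpos z H0). split; [lra|]. intros e He. apply local_chain; auto.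
Qed.

Lemma rel_refl p : Zinf p -> p <> x0 -> rel p p.
Proof.
  intros Zp Hp. exists (d p x0). split; [apply dpos; auto|]. intros e He.
  exists O, (fun _ => p). repeat split; auto; try lra; try (intros; lia).
Qed.

Lemma rel_all p q : Zinf p -> p <> x0 -> Zinf q -> q <> x0 -> rel p q.
Proof.
  intros Zp Hp Zq Hq. apply NNPP; intro Hn. apply H2c.
  exists (fun x => exists z, Zinf z /\ z <> x0 /\ rel p z /\ d z x < d z x0 / 3).
  exists (fun x => exists z, Zinf z /\ z <> x0 /\ ~ rel p z /\ d z x < d z x0 / 3).
  repeat split.
  - intros x [z [Zz [Hz [Rz Hx]]]]. exists (d z x0 / 3 - d z x). split; [lra|].
    intros y Hy. exists z. repeat split; auto. pose proof (d_tri Z d Hm z x y). lra.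
  - intros x [z [Zz [Hz [Rz Hx]]]]. exists (d z x0 / 3 - d z x). split; [lra|].
    intros y Hy. exists z. repeat split; auto. pose proof (d_tri Z d Hm z x y). lra.
  - intros x [Zx Hx]. pose proof (dpos x Hx). rewrite <- (d_refl Z d Hm x) in *.
    destruct (classic (rel p x)); [left|right]; exists x; repeat split; auto; rewrite d_refl in *; auto; lra.
  - exists p. split; [split; auto|]. exists p. pose proof (dpos p Hp). repeat split; auto.
    apply rel_refl; auto. rewrite d_refl; auto. lra.
  - exists q. split; [split; auto|]. exists q. pose proof (dpos q Hq). repeat split; auto.
    rewrite d_refl; auto. lra.
  - intros x [Zx Hx] [z1 [Z1 [H1 [R1 D1]]]] [z2 [Z2 [H2 [R2 D2]]]]. apply R2.
    apply rel_trans with x. apply rel_trans with z1; auto. apply local_rel; auto.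
    apply rel_sym. apply local_rel; auto.
Qed.

Lemma fold_min_pos {I : Type} (v : I -> R) (l : list I) :
  (forall i, In i l -> 0 < v i) -> 0 < fold_right (fun i acc => Rmin (v i) acc) 1 l.
Proof.
  induction l; simpl; intros H; [lra|]. apply Rmin_glb_lt; auto.
Qed.

Lemma fold_min_le {I : Type} (v : I -> R) (l : list I) i :
  In i l -> fold_right (fun i acc => Rmin (v i) acc) 1 l <= v i.
Proof.
  induction l; simpl; [tauto|]. intros [->|H]; [apply Rmin_l|]. eapply Rle_trans; [apply Rmin_r|auto].
Qed.

Lemma uniform_chain r0 : 0 < r0 -> exists rho, 0 < rho /\ forall p q, Zinf p -> Zinf q ->
  r0 <= d p x0 -> r0 <= d q x0 -> forall e, 0 < e -> chain rho e p q.
Proof.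
  intros Hr0.
  destruct (classic (exists p0, Zinf p0 /\ r0 <= d p0 x0)) as [[p0 [Zp0 Hp0]]|Hne];
   [|exists 1; split; [lra|]; intros p q Zp _ Hp; exfalso; apply Hne; eauto].
  assert (Hp0x : p0 <> x0) by (intro E; subst; rewrite d_refl in Hp0; auto; lra).
  set (P := fun (i : Z * R) => Zinf (fst i) /\ fst i <> x0 /\ 0 < snd i /\ forall e, 0 < e -> chain (snd i) e p0 (fst i)).
  destruct (HZinfc (option (Z * R)) (fun i w => match i with None => d x0 w < r0
     | Some i => d (fst i) w < d (fst i) x0 / 3 /\ P i end)) as [l Hl].
  - intros [i|].
    + destruct (classic (P i)) as [Pi|Pi].
      * intros w [Hw _]. destruct (open_ball Z d Hm (fst i) _ w Hw) as [e [He Hb]]. exists e. split; [exact He|].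
        intros z Hz. split; [apply Hb; exact Hz|exact Pi].
      * intros w [_ Hw]. tauto.
    + apply open_ball; auto.
  - intros w Zw. destruct (Rlt_dec (d x0 w) r0) as [H|H]; [exists None; auto|].
    assert (Hw : w <> x0) by (intro E; subst; rewrite d_refl in H; auto; lra).
    destruct (rel_all p0 w Zp0 Hp0x Zw Hw) as [rho [Hrho Hc]].
    exists (Some (w, rho)). simpl. rewrite d_refl by auto. pose proof (dpos w Hw).
    split; [lra|]. unfold P; simpl. auto.
  - set (v := fun (i : option (Z * R)) => match i with None => 1 | Some i =>
       if ClassicalDescription.excluded_middle_informative (P i) then Rmin (snd i) (d (fst i) x0 / 3) else 1 end).
    set (rho := fold_right (fun i acc => Rmin (v i) acc) 1 l).
    assert (Hrho : 0 < rho).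
    { apply fold_min_pos. intros [i|] _; simpl; [|lra].
      destruct (ClassicalDescription.excluded_middle_informative (P i)) as [[_ [Hi [Hs _]]]|_]; [|lra].
      apply Rmin_glb_lt; auto. pose proof (dpos _ Hi). lra. }
    assert (Hreach : forall p, Zinf p -> r0 <= d p x0 -> forall e, 0 < e -> chain rho e p0 p).
    { intros p Zp Hp e He. destruct (Hl p Zp) as [[i|] [Hin Hi]].
      - destruct Hi as [Hd Pi]. pose proof (fold_min_le v l _ Hin) as Hle. fold rho in Hle.
        simpl in Hle. destruct (ClassicalDescription.excluded_middle_informative (P i)) as [_|]; [|tauto].
        destruct Pi as [Zi [Hix [Hsi Hci]]].
        apply chain_app with (fst i).
        + apply chain_mono with (snd i); [eapply Rle_trans; [exact Hle|apply Rmin_l]|auto].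
        + apply chain_mono with (d (fst i) x0 / 3); [eapply Rle_trans; [exact Hle|apply Rmin_r]|].
          apply local_chain; auto.
      - simpl in Hi. rewrite (d_sym Z d Hm) in Hi. lra. }
    exists rho. split; auto. intros p q Zp Zq Hp Hq e He.
    apply chain_app with p0; [apply chain_rev|]; apply Hreach; auto.
Qed.

End Chains.

Section Loc.
Variable Z : Type.
Variable d : Z -> Z -> R.
Hypothesis Hm : is_metric d.
Variable Zinf : Z -> Prop.
Variable Zn : nat -> Z -> Prop.
Hypothesis Hgeod : forall n, geodesic d (Zn n).
Hypothesis HH : hausdorff_cv d Zn Zinf.

Lemma loc_chain z w r : Zinf z -> Zinf w -> d z w < r -> forall e, 0 < e ->
  exists m (f : nat -> Z), f O = z /\ f m = w /\ (forall j, (j <= m)%nat -> Zinf (f j) /\ d z (f j) < r + e) /\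
    (forall j, (j < m)%nat -> d (f j) (f (S j)) < e).
Proof.
  intros Zz Zw Hzw e He.
  set (eta := e / 4).
  destruct (HH eta ltac:(unfold eta; lra)) as [N HN].
  destruct (HN N (le_n _)) as [H1 H2].
  destruct (H2 z Zz) as [z' [Zz' Hz']]. destruct (H2 w Zw) as [w' [Zw' Hw']].
  destruct (Hgeod N z' w' Zz' Zw') as [g [Hg0 [HgL [HgZ Hgi]]]].
  set (L := d z' w') in *.
  assert (HL0 : 0 <= L) by apply (d_nonneg Z d Hm).
  assert (HLb : L < d z w + 2 * eta).
  { pose proof (d_tri Z d Hm z' z w'). pose proof (d_tri Z d Hm z w w'). rewrite (d_sym Z d Hm z' z) in H.
    unfold L. lra. }
  destruct (archimed_cor1 (eta / (L + 1))) as [M [HM HM0]].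
  { apply Rdiv_lt_0_compat; unfold eta; lra. }
  assert (HMpos : 0 < INR M) by (apply lt_0_INR; lia).
  assert (Hstep : L / INR M < eta).
  { unfold Rdiv. assert (L * / INR M <= (L + 1) * / INR M).
    { apply Rmult_le_compat_r; [left; apply Rinv_0_lt_compat; auto|lra]. }
    assert ((L + 1) * / INR M < (L+1) * (eta / (L + 1))) by (apply Rmult_lt_compat_l; lra).
    replace ((L+1) * (eta / (L + 1))) with eta in H0 by (field; lra). lra. }
  set (s := fun j : nat => L * INR j / INR M).
  assert (Hs : forall j, (j <= M)%nat -> 0 <= s j <= L).
  { intros j Hj. unfold s. pose proof (pos_INR j). pose proof (le_INR _ _ Hj). split.
    - apply Rmult_le_pos; [apply Rmult_le_pos; lra|left; apply Rinv_0_lt_compat; auto].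
    - unfold Rdiv. apply (Rmult_le_reg_r (INR M)); auto. rewrite Rmult_assoc, Rinv_l by lra. nra. }
  assert (Hss : forall j, Rabs (s j - s (S j)) = L / INR M).
  { intro j. unfold s. rewrite S_INR. replace (L * INR j / INR M - L * (INR j + 1) / INR M) with (- (L / INR M)) by (field; lra).
    rewrite Rabs_Ropp. apply Rabs_right. apply Rle_ge. apply Rmult_le_pos; [lra|left; apply Rinv_0_lt_compat; auto]. }
  assert (Hsel : forall j, exists b, (j <= M)%nat -> Zinf b /\ d (g (s j)) b < eta).
  { intro j. destruct (Compare_dec.le_lt_dec j M) as [Hj|Hj].
    - destruct (H1 (g (s j)) (HgZ _ (Hs j Hj))) as [b [Zb Hb]]. exists b. auto.
    - exists z. intro; lia. }
  set (G := fun j => proj1_sig (constructive_indefinite_description _ (Hsel j))).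
  assert (HG : forall j, (j <= M)%nat -> Zinf (G j) /\ d (g (s j)) (G j) < eta).
  { intros j Hj. unfold G. destruct (constructive_indefinite_description _ (Hsel j)) as [b Hb]. simpl. auto. }
  assert (Hs0 : s O = 0) by (unfold s; simpl; field; lra).
  assert (HsM : s M = L) by (unfold s; field; lra).
  assert (Hdz : forall j, (j <= M)%nat -> d z (G j) < r + e).
  { intros j Hj. destruct (HG j Hj) as [_ Hj2].
    pose proof (d_tri Z d Hm z z' (g (s j))). pose proof (d_tri Z d Hm z (g (s j)) (G j)).
    rewrite <- Hg0 in H at 2. rewrite Hgi in H by (try apply Hs; auto; lra).
    rewrite Rabs_left1 in H by (pose proof (Hs j Hj); lra). pose proof (Hs j Hj). unfold eta in *. lra. }
  exists (S (S M)), (fun j => if Nat.eqb j O then z else if Nat.leb j (S M) then G (pred j) else w).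
  split; [reflexivity|]. split.
  { cbn [Nat.eqb]. destruct (Nat.leb_spec (S (S M)) (S M)); [lia|reflexivity]. }
  split.
  - intros j Hj. destruct (Nat.eqb_spec j O) as [->|Hj0].
    + rewrite (d_refl Z d Hm). pose proof (d_nonneg Z d Hm z w). split; [exact Zz|lra].
    + destruct (Nat.leb_spec j (S M)).
      * split; [apply HG; lia|apply Hdz; lia].
      * split; [exact Zw|lra].
  - intros j Hj. destruct (Nat.eqb_spec j O) as [->|Hj0].
    + simpl. destruct (HG O ltac:(lia)) as [_ HG0]. rewrite Hs0, Hg0 in HG0.
      pose proof (d_tri Z d Hm z z' (G O)). unfold eta in *. lra.
    + destruct (Nat.eqb_spec (S j) O) as [|_]; [lia|].
      destruct (Nat.leb_spec j (S M)); [|lia]. destruct (Nat.leb_spec (S j) (S M)).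
      * simpl. destruct j as [|j]; [lia|]. simpl.
        destruct (HG j ltac:(lia)) as [_ Ha]. destruct (HG (S j) ltac:(lia)) as [_ Hb].
        pose proof (d_tri Z d Hm (G j) (g (s j)) (G (S j))) as T1.
        pose proof (d_tri Z d Hm (g (s j)) (g (s (S j))) (G (S j))) as T2.
        rewrite Hgi in T2 by (apply Hs; lia). rewrite Hss in T2. rewrite (d_sym Z d Hm) in Ha.
        unfold eta in *. lra.
      * assert (j = S M) by lia. subst j. simpl.
        destruct (HG M ltac:(lia)) as [_ Ha]. rewrite HsM, HgL in Ha.
        pose proof (d_tri Z d Hm (G M) w' w) as T1. rewrite (d_sym Z d Hm (G M) w') in T1.
        rewrite (d_sym Z d Hm w' w) in T1. unfold eta in *. lra.
Qed.

End Loc.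

Section Main.
Variable Z : Type.
Variable d : Z -> Z -> R.
Hypothesis Hmetric : is_metric d.
Hypothesis HZ : is_compact d (fun _ => True).
Variable X : nat -> Z -> Prop.
Variable Y : nat -> nat -> Z -> Prop.
Variable y : nat -> nat -> Z.
Variable Zinf : Z -> Prop.
Variable mu : nat -> (Z -> Prop) -> R.
Variable muinf : (Z -> Prop) -> R.
Hypothesis HXc : forall n, is_compact d (X n).
Hypothesis HYc : forall n i, is_compact d (Y n i).
Hypothesis HYdisj : forall n i j z, i <> j -> Y n i z -> Y n j z -> False.
Hypothesis Hy : forall n i, (exists z, Y n i z) -> Y n i (y n i) /\ X n (y n i).
Hypothesis HZnc : forall n, is_compact d (fun z => X n z \/ exists i, Y n i z).
Hypothesis Hmu : forall n, finite_borel_measure d (mu n).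
Hypothesis HmuZn : forall n, mu n (fun z => ~ (X n z \/ exists i, Y n i z)) = 0.
Hypothesis Hmuinf : finite_borel_measure d muinf.
Hypothesis HZinfc : is_compact d Zinf.
Hypothesis HH : hausdorff_cv d (fun n z => X n z \/ exists i, Y n i z) Zinf.
Hypothesis Hgeod : forall n, geodesic d (fun z => X n z \/ exists i, Y n i z).
Hypothesis H2c : two_connected d Zinf.
Hypothesis HP : prokhorov_cv d mu muinf.
Hypothesis Hdiff : diffuse muinf.
Hypothesis HdiamXY : forall eps, 0 < eps -> exists N, forall n, (N <= n)%nat ->
      forall i, diam_le d (fun z => X n z /\ Y n i z) eps.
Hypothesis Hliminf : Rbar_lt (Finite 0) (LimInf_seq (fun n => mu n (X n))).

Let dsym := d_sym Z d Hmetric.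
Let dtri := d_tri Z d Hmetric.
Let dref := d_refl Z d Hmetric.

Lemma mass_lb : exists m0 N, 0 < m0 /\ forall n, (N <= n)%nat -> m0 < mu n (X n).
Proof.
  revert Hliminf. unfold LimInf_seq. destruct (ex_LimInf_seq (fun n => mu n (X n))) as [l Hl]. simpl.
  destruct l as [l| |]; simpl; intro Hlt; [|exists 1; destruct (Hl 1) as [N HN]; exists N; split; [lra|auto]|tauto].
  destruct (Hl (mkposreal (l/2) ltac:(lra))) as [_ [N HN]]. exists (l/2), N. split; [lra|].
  intros n Hn. specialize (HN n Hn). simpl in HN. lra.
Qed.

Lemma part1 : forall eps, 0 < eps -> exists N, forall n, (N <= n)%nat -> forall i, diam_le d (Y n i) eps.
Proof.
  apply NNPP; intro Hn.
  assert (Hex : exists eps, 0 < eps /\ forall N, exists n u, (N <= n)%nat /\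
      (exists i a b, Y n i a /\ Y n i b /\ eps < d a b /\ u = y n i) /\ True).
  { apply NNPP; intro H1. apply Hn. intros eps Heps. apply NNPP; intro H2. apply H1. exists eps. split; auto.
    intro N. apply NNPP; intro H3. apply H2. exists N. intros n Hnn i a b Ya Yb. apply Rnot_lt_le. intro H4.
    apply H3. exists n, (y n i). split; auto. split; auto. exists i, a, b. auto. }
  destruct Hex as [eps [Heps HQ]].
  destruct (cluster Z d Hmetric _ _ HZ HQ) as [x0 [_ Hx0]].
  assert (HYn : forall n i a, Y n i a -> Y n i (y n i) /\ X n (y n i)) by (intros; apply Hy; eauto).
  assert (Zx0 : Zinf x0).
  { apply (compact_closed Z d Hmetric _ HZinfc). intros e He.
    destruct (HH (e/2) ltac:(lra)) as [N HN].
    destruct (Hx0 (e/2) ltac:(lra) N) as [n [u [Hnn [[i [a [b [Ya [Yb [_ ->]]]]]] Hu]]]].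
    destruct (HN n Hnn) as [H1 _]. destruct (H1 (y n i)) as [w [Zw Hw]].
    { left. apply (HYn n i a Ya). }
    exists w. split; auto. pose proof (dtri x0 (y n i) w). rewrite (dsym x0 (y n i)) in H. lra. }
  destruct mass_lb as [m0 [N1 [Hm0 HN1]]].
  destruct (small_ball_at Z d Hmetric muinf Hmuinf x0 (Hdiff x0) (m0/3) ltac:(lra)) as [r [Hr Hball]].
  set (r1 := r / 2).
  set (e' := Rmin r1 (m0/3)).
  assert (He' : 0 < e') by (apply Rmin_glb_lt; unfold r1; lra).
  destruct (HP e' He') as [N2 HN2].
  assert (Hfar : forall n, (N1 <= n)%nat -> (N2 <= n)%nat -> exists b, X n b /\ r1 < d b x0).
  { intros n Hn1 Hn2. apply NNPP; intro Hno.
    assert (Hsub : forall z, nbhd d (X n) e' z -> d x0 z < r).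
    { intros z [a [Xa Hza]]. assert (d a x0 <= r1) by (apply Rnot_lt_le; intro; apply Hno; eauto).
      pose proof (Rmin_l r1 (m0/3)). pose proof (dtri x0 a z). rewrite (dsym x0 a), (dsym a z) in H1.
      unfold e', r1 in *. lra. }
    destruct (HN2 n Hn2 (X n) (borel_compact Z d Hmetric _ (HXc n))) as [Hle _].
    assert (muinf (nbhd d (X n) e') <= muinf (fun z => d x0 z < r)).
    { apply (m_mono Z d muinf Hmuinf); auto.
      apply borel_open, open_nbhd; auto. apply borel_open, open_ball; auto. }
    specialize (HN1 n Hn1). pose proof (Rmin_r r1 (m0/3)). fold e' in H0. lra. }
  set (r0 := Rmin (eps/4) (r1/2)).
  assert (Hr0 : 0 < r0) by (apply Rmin_glb_lt; unfold r1; lra).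
  assert (Hconn : connected d (fun z => Zinf z /\ z <> x0)) by (apply H2c; auto).
  destruct (uniform_chain Z d Hmetric Zinf x0 HZinfc Hconn
     (loc_chain Z d Hmetric Zinf _ Hgeod HH) r0 Hr0) as [rho [Hrho Hunif]].
  set (th := Rmin (rho/7) (Rmin (eps/8) (r1/4))).
  assert (Hth : 0 < th) by (apply Rmin_glb_lt; [lra|apply Rmin_glb_lt; unfold r1; lra]).
  assert (Hth1 : th <= rho/7) by apply Rmin_l.
  assert (Hth2 : th <= eps/8) by (eapply Rle_trans; [apply Rmin_r|apply Rmin_l]).
  assert (Hth3 : th <= r1/4) by (eapply Rle_trans; [apply Rmin_r|apply Rmin_r]).
  destruct (HH th Hth) as [NH HNH].
  destruct (HdiamXY th Hth) as [Nd HNd].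
  destruct (Hx0 th Hth (N1 + N2 + NH + Nd)%nat) as [n [u [Hnn [[i [a [b' [Ya [Yb [Hab ->]]]]]] Hu]]]].
  destruct (HYn n i a Ya) as [Yc Xc].
  set (c := y n i) in *.
  assert (Hdiam : forall p, X n p -> Y n i p -> d p c <= th).
  { intros p Xp Yp. apply (HNd n ltac:(lia) i); split; auto. }
  assert (Ha1 : exists a1, Y n i a1 /\ eps/2 < d c a1).
  { destruct (Rlt_dec (eps/2) (d c a)) as [H|H]; [exists a; auto|].
    exists b'. split; auto. pose proof (dtri a c b'). rewrite (dsym a c) in H0. lra. }
  destruct Ha1 as [a1 [Ya1 Ha1]].
  destruct (HNH n ltac:(lia)) as [HN1' HN2'].
  destruct (HN1' a1) as [p' [Zp' Hp']]; [right; exists i; auto|].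
  destruct (Hfar n ltac:(lia) ltac:(lia)) as [b [Xb Hb]].
  destruct (HN1' b) as [q' [Zq' Hq']]; [left; auto|].
  assert (Hp0 : r0 <= d p' x0).
  { pose proof (dtri c x0 p'). pose proof (dtri c p' a1). pose proof (Rmin_l (eps/4) (r1/2)).
    pose proof (dsym p' x0). pose proof (dsym p' a1). fold r0 in H1. lra. }
  assert (Hq0 : r0 <= d q' x0).
  { pose proof (dtri b q' x0). pose proof (Rmin_r (eps/4) (r1/2)). fold r0 in H0. lra. }
  destruct (Hunif p' q' Zp' Zq' Hp0 Hq0 th Hth) as [m [f [F0 [Fm [Fin Fmesh]]]]].
  assert (HXcl : closedZ Z d (X n)) by (apply compact_closed; auto).
  assert (HYcl : forall j, closedZ Z d (Y n j)) by (intro; apply compact_closed; auto).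
  pose proof (geo_split Z d Hmetric (X n) (Y n) HXcl HYcl (HYdisj n) (Hgeod n) i) as Hgs.
  assert (Hind : forall j, (j <= m)%nat -> exists w, Y n i w /\ d (f j) w < th).
  { induction j as [|j IH]; intro Hj.
    - exists a1. split; auto. rewrite F0, dsym. auto.
    - destruct (IH ltac:(lia)) as [w [Yw Hw]].
      destruct (Fin (S j) Hj) as [ZS _]. destruct (HN2' _ ZS) as [a' [Za' Ha']].
      destruct (classic (Y n i a')) as [Ya'|Ya']; [exists a'; auto|].
      exfalso. destruct (Hgs w a' Yw Za' Ya') as [pt [Xpt [Ypt Hpt]]].
      pose proof (Hdiam pt Xpt Ypt).
      destruct (Fin j ltac:(lia)) as [_ Hj0]. specialize (Fmesh j ltac:(lia)).
      pose proof (dtri w (f j) a'). pose proof (dtri (f j) (f (S j)) a').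
      pose proof (dtri (f j) w x0). pose proof (dtri w pt x0). pose proof (dtri pt c x0).
      pose proof (dsym w (f j)). pose proof (dsym c x0). pose proof (dsym pt c). pose proof (d_nonneg Z d Hmetric pt a'). lra. }
  destruct (Hind m (le_n _)) as [w [Yw Hw]]. rewrite Fm in Hw.
  destruct (classic (Y n i b)) as [Yb'|Yb'].
  - pose proof (Hdiam b Xb Yb'). pose proof (dtri b c x0). pose proof (dsym c x0). unfold r1 in *. lra.
  - destruct (Hgs w b Yw (or_introl Xb) Yb') as [pt [Xpt [Ypt Hpt]]].
    pose proof (Hdiam pt Xpt Ypt).
    pose proof (dtri w q' b). pose proof (dtri b pt x0). pose proof (dtri pt c x0).
    pose proof (dsym w q'). pose proof (dsym q' b). pose proof (dsym b pt). pose proof (dsym c x0).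
    pose proof (d_nonneg Z d Hmetric w pt). unfold r1 in *. lra.
Qed.

Lemma partI : hausdorff_cv d X Zinf.
Proof.
  intros eps Heps.
  destruct (HH (eps/2) ltac:(lra)) as [N1 HN1]. destruct (part1 (eps/4) ltac:(lra)) as [N2 HN2].
  exists (N1 + N2)%nat. intros n Hn. destruct (HN1 n ltac:(lia)) as [H1 H2]. split.
  - intros a Xa. destruct (H1 a (or_introl Xa)) as [b [Zb Hb]]. exists b. split; auto. lra.
  - intros b Zb. destruct (H2 b Zb) as [a [Za Hab]]. destruct Za as [Xa|[i Ya]].
    + exists a. split; auto. lra.
    + destruct (Hy n i (ex_intro _ a Ya)) as [Yc Xc]. exists (y n i). split; auto.
      pose proof (HN2 n ltac:(lia) i a (y n i) Ya Yc). pose proof (dtri b a (y n i)). lra.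
Qed.

Lemma borel_const_and (P : Prop) (B : Z -> Prop) : borel d B -> borel d (fun z => P /\ B z).
Proof.
  intro HB. destruct (classic P) as [HP'|HP'].
  - apply borel_ext with B; auto. tauto.
  - apply borel_ext with (fun _ => False); [apply borel_empty|tauto].
Qed.

Lemma HYb n i : borel d (fun z => Y n i z /\ ~ X n z).
Proof.
  apply borel_inter; [apply borel_compact; auto|apply borel_compl, borel_compact; auto].
Qed.

Lemma partIV : forall eps, 0 < eps -> exists N, forall n, (N <= n)%nat ->
      forall i, mu n (fun z => Y n i z /\ ~ X n z) <= eps.
Proof.
  intros eps Heps.
  destruct (small_ball_unif Z d Hmetric muinf Hmuinf HZ Hdiff (eps/2) ltac:(lra)) as [r [Hr Hb]].
  set (e' := Rmin (r/3) (eps/2)).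
  assert (He' : 0 < e') by (apply Rmin_glb_lt; lra).
  pose proof (Rmin_l (r/3) (eps/2)). pose proof (Rmin_r (r/3) (eps/2)). fold e' in H, H0.
  destruct (HP e' He') as [N1 HN1]. destruct (part1 (r/3) ltac:(lra)) as [N2 HN2].
  exists (N1 + N2)%nat. intros n Hn i.
  assert (HYi : borel d (Y n i)) by (apply borel_compact; auto).
  assert (H1 : mu n (fun z => Y n i z /\ ~ X n z) <= mu n (Y n i)).
  { apply (m_mono Z d (mu n) (Hmu n)); auto. apply HYb. tauto. }
  destruct (HN1 n ltac:(lia) (Y n i) HYi) as [H2 _].
  assert (H3 : muinf (nbhd d (Y n i) e') <= muinf (fun z => d (y n i) z < r)).
  { apply (m_mono Z d muinf Hmuinf); try (apply borel_open; try apply open_nbhd; try apply open_ball; auto).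
    intros z [a [Ya Hza]]. destruct (Hy n i (ex_intro _ a Ya)) as [Yc _].
    pose proof (HN2 n ltac:(lia) i (y n i) a Yc Ya). pose proof (dtri (y n i) a z). pose proof (dsym z a). lra. }
  specialize (Hb (y n i)). lra.
Qed.

Lemma mut_eq n A : borel d A ->
  mu n (fun z => A z /\ X n z) + Series (fun i => mu n (fun z => Y n i z /\ ~ X n z) * dirac (y n i) A) =
  mu n (fun z => (A z /\ X n z) \/ exists i, A (y n i) /\ (Y n i z /\ ~ X n z)).
Proof.
  intro HA.
  assert (HE : forall i, mu n (fun z => Y n i z /\ ~ X n z) * dirac (y n i) A =
     mu n (fun z => A (y n i) /\ (Y n i z /\ ~ X n z))).
  { intro i. unfold dirac. destruct (ClassicalDescription.excluded_middle_informative (A (y n i))) as [Ha|Ha].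
    - rewrite Rmult_1_r. apply m_ext. tauto.
    - rewrite Rmult_0_r. symmetry. apply (m_null Z d (mu n) (Hmu n)). tauto. }
  rewrite (Series_ext _ _ HE).
  assert (HEb : forall i, borel d (fun z => A (y n i) /\ (Y n i z /\ ~ X n z))).
  { intro i. apply borel_const_and, HYb. }
  rewrite (is_series_unique _ _ (m_cunion Z d (mu n) (Hmu n) _ HEb ltac:(intros j k z Hjk [_ [Hj _]] [_ [Hk _]]; eapply HYdisj; eauto))).
  symmetry. apply (m_add2 Z d (mu n) (Hmu n)).
  - apply borel_inter; auto. apply borel_compact; auto.
  - apply borel_cunion; auto.
  - intros z [_ Xz] [i [_ [_ NXz]]]. auto.
Qed.

Lemma HTb n A : borel d A -> borel d (fun z => (A z /\ X n z) \/ exists i, A (y n i) /\ (Y n i z /\ ~ X n z)).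
Proof.
  intro HA. apply borel_union. apply borel_inter; auto. apply borel_compact; auto.
  apply borel_cunion. intro i. apply borel_const_and, HYb.
Qed.

Lemma partII : prokhorov_cv d
  (fun n (A : Z -> Prop) => mu n (fun z => A z /\ X n z) +
      Series (fun i => mu n (fun z => Y n i z /\ ~ X n z) * dirac (y n i) A)) muinf.
Proof.
  intros eps Heps.
  destruct (HP (eps/2) ltac:(lra)) as [N1 HN1]. destruct (part1 (eps/4) ltac:(lra)) as [N2 HN2].
  exists (N1 + N2)%nat. intros n Hn A HA.
  assert (HAo : forall e, borel d (nbhd d A e)) by (intro; apply borel_open, open_nbhd; auto).
  rewrite !mut_eq; auto.
  destruct (HN1 n ltac:(lia) (nbhd d A (eps/2)) (HAo _)) as [H1 _].
  destruct (HN1 n ltac:(lia) A HA) as [_ H2].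
  split.
  - assert (H3 : mu n (fun z => (A z /\ X n z) \/ exists i, A (y n i) /\ (Y n i z /\ ~ X n z)) <= mu n (nbhd d A (eps/2))).
    { apply (m_mono Z d (mu n) (Hmu n)); auto. apply HTb; auto.
      intros z [[Az _]|[i [Ay [Yz _]]]].
      - exists z. rewrite dref. split; auto. lra.
      - exists (y n i). split; auto. destruct (Hy n i (ex_intro _ z Yz)) as [Yc _].
        pose proof (HN2 n ltac:(lia) i z (y n i) Yz Yc). lra. }
    assert (H4 : muinf (nbhd d (nbhd d A (eps/2)) (eps/2)) <= muinf (nbhd d A eps)).
    { apply (m_mono Z d muinf Hmuinf); [apply borel_open, open_nbhd; auto|exact (HAo _)|]. intros z [a [[b [Ab Hab]] Hza]]. exists b. split; auto.
      pose proof (dtri z a b). lra. }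
    lra.
  - assert (H3 : mu n (nbhd d A (eps/2)) = mu n (fun z => nbhd d A (eps/2) z /\ (X n z \/ exists i, Y n i z))).
    { apply (m_restrict Z d (mu n) (Hmu n)); auto. apply borel_compact; auto. }
    assert (H4 : mu n (fun z => nbhd d A (eps/2) z /\ (X n z \/ exists i, Y n i z)) <=
       mu n (fun z => (nbhd d A eps z /\ X n z) \/ exists i, nbhd d A eps (y n i) /\ (Y n i z /\ ~ X n z))).
    { apply (m_mono Z d (mu n) (Hmu n)); auto.
      - apply borel_inter; auto. apply borel_compact; auto.
      - apply HTb; auto.
      - intros z [[a [Aa Hza]] Hz]. destruct (classic (X n z)) as [Xz|NXz].
        + left. split; auto. exists a. split; auto. lra.
        + destruct Hz as [Xz|[i Yz]]; [tauto|]. right. exists i. split; [|auto].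
          destruct (Hy n i (ex_intro _ z Yz)) as [Yc _]. exists a. split; auto.
          pose proof (HN2 n ltac:(lia) i (y n i) z Yc Yz). pose proof (dtri (y n i) z a). lra. }
    lra.
Qed.

End Main.

Theorem lemma2p2
  (Z : Type) (d : Z -> Z -> R)
  (Hmetric : is_metric d) (HZ : is_compact d (fun _ => True))
  (X : nat -> Z -> Prop) (Y : nat -> nat -> Z -> Prop) (y : nat -> nat -> Z)
  (Zinf : Z -> Prop) (mu : nat -> (Z -> Prop) -> R) (muinf : (Z -> Prop) -> R)
  (* structure of Z_n = X_n  \cup  disjoint union of the Y_n^(i) *)
  (HXc : forall n, is_compact d (X n))
  (HXne : forall n, exists x, X n x)
  (HYc : forall n i, is_compact d (Y n i))
  (HYdisj : forall n i j z, i <> j -> Y n i z -> Y n j z -> False)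
  (HYint : forall n i, (exists z, Y n i z) -> exists z, Y n i z /\ X n z)
  (Hy : forall n i, (exists z, Y n i z) -> Y n i (y n i) /\ X n (y n i))
  (HZnc : forall n, is_compact d (fun z => X n z \/ exists i, Y n i z))
  (* measures *)
  (Hmu : forall n, finite_borel_measure d (mu n))
  (HmuZn : forall n, mu n (fun z => ~ (X n z \/ exists i, Y n i z)) = 0)
  (Hmuinf : finite_borel_measure d muinf)
  (* convergence and geometric assumptions *)
  (HZinfc : is_compact d Zinf)
  (HH : hausdorff_cv d (fun n z => X n z \/ exists i, Y n i z) Zinf)
  (Hgeod : forall n, geodesic d (fun z => X n z \/ exists i, Y n i z))
  (H2c : two_connected d Zinf)
  (HP : prokhorov_cv d mu muinf)
  (Hdiff : diffuse muinf)
  (HdiamXY : forall eps, 0 < eps -> exists N, forall n, (N <= n)%nat ->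
      forall i, diam_le d (fun z => X n z /\ Y n i z) eps)
  (Hliminf : Rbar_lt (Finite 0) (LimInf_seq (fun n => mu n (X n)))) :
  let gamma := fun n i => mu n (fun z => Y n i z /\ ~ X n z) in
  let mutilde := fun n (A : Z -> Prop) =>
      mu n (fun z => A z /\ X n z) + Series (fun i => gamma n i * dirac (y n i) A) in
  (forall eps, 0 < eps -> exists N, forall n, (N <= n)%nat ->
      forall i, diam_le d (Y n i) eps) /\
  hausdorff_cv d X Zinf /\
  prokhorov_cv d mutilde muinf /\
  (forall eps, 0 < eps -> exists N, forall n, (N <= n)%nat ->
      forall i, gamma n i <= eps).
Proof.
  intros gamma mutilde. unfold mutilde, gamma.
  split; [eapply part1; eassumption|].
  split; [eapply partI; eassumption|].
  split; [eapply partII; eassumption|eapply partIV; eassumption].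
Qed.
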